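(* Let $G$, $A$, $H$, $(K,v)$, $\sigma$, $\delta$ be as in the context, let $\alpha,\alpha':H\to G$ be two transversal maps with associated cocycles $\beta,\beta'$. Then the valued field $(K(t^H,\beta')_\delta,val')$, with value group $G_{\beta'}$, is isomorphic as a valued field to $(K(t^H,\beta)_\delta,val)$, with value group $G_\beta$.
   Context: $G$ is an ordered abelian group with smallest nonzero convex subgroup $A$, $H=G/A$ with the induced order, $\rho:G\to H$ the projection. A transversal map is $\alpha:H\to G$ with $\rho\alpha=\mathrm{id}_H$, $\alpha(0)=0$; its cocycle is $\beta(h,h')=\alpha(h+h')-\alpha(h)-\alpha(h')\in A$. $G_\beta$ is $A\times H$ with $(z,h)+(z',h')=(z+z'-\beta(h,h'),h+h')$ and lexicographic order ($(z,h)\le(z',h')$ iff $h<h'$, or $h=h'$ and $z\le z'$). $(K,v)$ is a valued field of characteristic $0$, residue characteristic $p$, value group $A$, with cross-section $\sigma:A\to K^\times$ ($v(\sigma(a))=a$). For an infinite cardinal $\delta$, $K(t^H,\beta)_\delta$ is the field of formal sums $\sum_{h\in S}a_ht^h$, $S\subseteq H$ well ordered, $|S|\le\delta$, $a_h\in K$, with coefficientwise addition, multiplication $\left(\sum a_ht^h\right)\left(\sum b_ht^h\right)=\sum_l\left(\sum_{h+h'=l}a_hb_{h'}\sigma(-\beta(h,h'))\right)t^l$, and valuation $val(\sum_{h\in S}a_ht^h)=(v(a_{h_0}),h_0)$, $h_0=\min S$; similarly for $\beta'$. *)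

(* Defs.v *)
From HB Require Import structures.
From mathcomp Require Import all_boot all_order all_algebra.
From mathcomp Require Import boolp classical_sets fsbigop.
Set Implicit Arguments. Unset Strict Implicit. Unset Printing Implicit Defensive.
Import Order.TTheory GRing.Theory.
Local Open Scope ring_scope.

Section Defs.
Variables (G A H : zmodType) (leG : G -> G -> Prop) (leH : H -> H -> Prop).

Definition ordered_abelian_group : Prop :=
  [/\ forall x, leG x x,
      forall x y, leG x y -> leG y x -> x = y,
      forall x y z, leG x y -> leG y z -> leG x z,
      forall x y, leG x y \/ leG y x
    & forall x y z, leG x y -> leG (x + z) (y + z)].

Definition convex_subgroup (S : G -> Prop) : Prop :=
  [/\ S 0,
      forall x y, S x -> S y -> S (x - y)
    & forall x y z, S x -> S z -> leG x y -> leG y z -> S y].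

Definition nonzero_set (S : G -> Prop) : Prop := exists x, S x /\ x <> 0.

Definition smallest_nonzero_convex_subgroup (S : G -> Prop) : Prop :=
  [/\ convex_subgroup S, nonzero_set S &
      forall T, convex_subgroup T -> nonzero_set T -> forall x, S x -> T x].

Definition leA (iota : A -> G) (a b : A) : Prop := leG (iota a) (iota b).

(** G_beta = A x H with the twisted addition and the lexicographic order. *)
Definition addGb (beta : H -> H -> A) (x y : A * H) : A * H :=
  (x.1 + y.1 - beta x.2 y.2, x.2 + y.2).

Definition leGb (iota : A -> G) (x y : A * H) : Prop :=
  (leH x.2 y.2 /\ x.2 <> y.2) \/ (x.2 = y.2 /\ leA iota x.1 y.1).

Variables (K : fieldType) (D : Type).

(** support of a formal sum f = sum_h f(h) t^h *)
Definition supp (f : H -> K) : H -> Prop := fun h => f h <> 0.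

Definition well_ordered_in (S : H -> Prop) : Prop :=
  forall P : H -> Prop, (forall h, P h -> S h) -> (exists h, P h) ->
    exists m, P m /\ forall h, P h -> leH m h.

(** |S| <= delta, delta being the cardinality of the type D *)
Definition card_le (S : H -> Prop) : Prop :=
  exists e : H -> D, forall h h', S h -> S h' -> e h = e h' -> h = h'.

(** elements of K(t^H, beta)_delta (the carrier does not depend on beta) *)
Definition is_series (f : H -> K) : Prop :=
  well_ordered_in (supp f) /\ card_le (supp f).

Definition ser_add (f g : H -> K) : H -> K := fun h => f h + g h.

Definition ser_mul (sigma : A -> K) (beta : H -> H -> A) (f g : H -> K)
  : H -> K := fun l =>
  (\sum_(h \in [set: H]) (f h * g (l - h) * sigma (- beta h (l - h))))%R.

Definition is_val (v : K -> A) (f : H -> K) (x : A * H) : Prop :=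
  f x.2 <> 0 /\ (forall h, f h <> 0 -> leH x.2 h) /\ x.1 = v (f x.2).

End Defs.

(* Main.v *)
Require Import Defs.
From HB Require Import structures.
From mathcomp Require Import all_boot all_order all_algebra.
From mathcomp Require Import boolp classical_sets fsbigop.
Import GRing.Theory.
Local Open Scope ring_scope.


From mathcomp Require Import ring.

Lemma z1 (A : zmodType) (b' z T : A) : - (b' + z) = - T - (b' + (z - T)).
Proof. by rewrite addrA opprB addKr. Qed.

Lemma z1' (A : zmodType) (b' g x y : A) : - b' - g = - x - y - (b' + (g - (x + y))).
Proof. rewrite -(opprD x y) -opprD; exact: z1. Qed.

Lemma z2 (G : zmodType) (S T S' T' : G) : S - T = (S' - T') + ((S - S') - (T - T')).
Proof. by rewrite opprB addrACA addKr addrCA subrr addr0. Qed.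

Lemma z2b (G : zmodType) (S T1 T2 S' T1' T2' : G) :
  S - T1 - T2 = (S' - T1' - T2') + ((S - S') - ((T1 + T2) - (T1' + T2'))).
Proof. by rewrite -(addrA S) -(addrA S') -!opprD; exact: z2. Qed.

Lemma z3 (G : zmodType) (a b a' b' : G) : (a - a') + (b - b') = (a + b) - (a' + b').
Proof. by rewrite opprD addrACA. Qed.

Lemma z4 (A : zmodType) (X Y gh gh' b' g : A) :
  X - gh + (Y - gh') - (b' + (g - (gh + gh'))) = X + Y - b' - g.
Proof.
rewrite addrACA -opprD; move: (gh + gh') (X + Y) => T S.
rewrite opprD opprB -!addrA; congr (_ + _).
by rewrite addrCA addKr.
Qed.

Lemma nzM (K : fieldType) (a b : K) : a <> 0 -> b <> 0 -> a * b <> 0.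
Proof. by move=> /eqP a0 /eqP b0; apply/eqP; rewrite mulf_neq0. Qed.

Theorem proposition2p3
  (* the ordered abelian group G *)
  (G : zmodType) (leG : G -> G -> Prop)
  (HG : ordered_abelian_group leG)
  (* A, given through an injective additive embedding iota whose image is the
     smallest nonzero convex subgroup of G *)
  (A : zmodType) (iota : A -> G)
  (iota_add : forall a b, iota (a - b) = iota a - iota b)
  (iota_inj : injective iota)
  (HA : smallest_nonzero_convex_subgroup leG (fun x => exists a, iota a = x))
  (* H = G/A with the induced order, rho the projection *)
  (H : zmodType) (leH : H -> H -> Prop) (rho : G -> H)
  (rho_add : forall x y, rho (x - y) = rho x - rho y)
  (rho_surj : forall h, exists g, rho g = h)
  (rho_ker : forall g, rho g = 0 <-> exists a, iota a = g)
  (leH_induced : forall h h',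
     leH h h' <-> exists g g', [/\ rho g = h, rho g' = h' & leG g g'])
  (* the valued field (K, v) of characteristic 0 with value group A *)
  (K : fieldType) (HK : [pchar K] =i pred0) (v : K -> A)
  (v_mul : forall x y, x <> 0 -> y <> 0 -> v (x * y) = v x + v y)
  (v_add : forall x y, x <> 0 -> y <> 0 -> x + y <> 0 ->
     leA leG iota (v x) (v (x + y)) \/ leA leG iota (v y) (v (x + y)))
  (v_surj : forall a, exists x, x <> 0 /\ v x = a)
  (* the cross-section sigma : A -> K^x *)
  (sigma : A -> K)
  (sigma_nz : forall a, sigma a <> 0)
  (sigma_add : forall a b, sigma (a + b) = sigma a * sigma b)
  (sigma_v : forall a, v (sigma a) = a)
  (* the infinite cardinal delta, as the cardinality of a type D *)
  (D : Type) (D_inf : exists e : nat -> D, injective e)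
  (* two transversal maps and their cocycles *)
  (alpha alpha' : H -> G)
  (alpha_sec : forall h, rho (alpha h) = h) (alpha0 : alpha 0 = 0)
  (alpha'_sec : forall h, rho (alpha' h) = h) (alpha'0 : alpha' 0 = 0)
  (beta beta' : H -> H -> A)
  (beta_def : forall h h', iota (beta h h') = alpha (h + h') - alpha h - alpha h')
  (beta'_def : forall h h', iota (beta' h h') = alpha' (h + h') - alpha' h - alpha' h') :
  (* a valued field isomorphism phi : K(t^H,beta')_delta -> K(t^H,beta)_delta
     together with an ordered group isomorphism psi : G_beta' -> G_beta such
     that val (phi f) = psi (val' f) *)
  exists (phi : (H -> K) -> (H -> K)) (psi : A * H -> A * H),
    (forall f, is_series leH D f -> is_series leH D (phi f)) /\
    (forall g, is_series leH D g -> exists f, is_series leH D f /\ phi f = g) /\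
    (forall f g, is_series leH D f -> is_series leH D g -> phi f = phi g -> f = g) /\
    (forall f g, is_series leH D f -> is_series leH D g ->
       phi (ser_add f g) = ser_add (phi f) (phi g)) /\
    (forall f g, is_series leH D f -> is_series leH D g ->
       phi (ser_mul sigma beta' f g) = ser_mul sigma beta (phi f) (phi g)) /\
    bijective psi /\
    (forall x y, psi (addGb beta' x y) = addGb beta (psi x) (psi y)) /\
    (forall x y, leGb leG leH iota x y <-> leGb leG leH iota (psi x) (psi y)) /\
    (forall f x, is_series leH D f -> is_val leH v f x ->
       is_val leH v (phi f) (psi x)).

Proof.
have iota0 : iota 0 = 0 by rewrite -(subrr 0) iota_add subrr.
have iotaN : forall a, iota (- a) = - iota a.
  by move=> a; rewrite -sub0r iota_add iota0 sub0r.
have iotaD : forall a b, iota (a + b) = iota a + iota b.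
  by move=> a b; rewrite -{1}[b]opprK iota_add iotaN opprK.
have ex_g : forall h, exists a, iota a = alpha h - alpha' h.
  by move=> h; apply/rho_ker; rewrite rho_add alpha_sec alpha'_sec subrr.
have [gamma Hg] := choice ex_g.
have cocy : forall h h', beta h h' = beta' h h' + (gamma (h + h') - (gamma h + gamma h')).
  move=> h h'; apply: iota_inj.
  rewrite iotaD iota_add iotaD !Hg beta_def beta'_def (@z3 _ (alpha h)).
  exact: z2b.
have sigma0 : sigma 0 = 1.
  apply: (@mulfI _ (sigma 0)); first by apply/eqP; apply: sigma_nz.
  by rewrite mulr1 -sigma_add addr0.
have leGt : forall x y z, leG x y <-> leG (x - z) (y - z).
  case: HG => _ _ _ _ Ht x y z; split; first exact: Ht.
  by move=> /(Ht _ _ z); rewrite !subrK.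
have leAt : forall a b c, leA leG iota a b <-> leA leG iota (a - c) (b - c).
  by move=> a b c; rewrite /leA !iota_add; apply: leGt.
pose phi := fun (f : H -> K) h => f h * sigma (- gamma h).
pose psi := fun x : A * H => (x.1 - gamma x.2, x.2).
have suppE : forall f, supp (phi f) = supp f.
  move=> f; apply: funext => h; apply: propext; rewrite /supp /phi; split.
    by move=> + fh; apply; rewrite fh mul0r.
  by move=> fh; apply: nzM.
have serE : forall f, is_series leH D (phi f) <-> is_series leH D f.
  by move=> f; rewrite /is_series suppE.
exists phi, psi; split; first by move=> f /serE.
split.
  move=> g sg; exists (fun h => g h * sigma (gamma h)); split.
    apply/serE; suff -> : phi (fun h => g h * sigma (gamma h)) = g by [].
    by apply: funext => h; rewrite /phi -mulrA -sigma_add subrr sigma0 mulr1.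
  by apply: funext => h; rewrite /phi -mulrA -sigma_add subrr sigma0 mulr1.
split.
  move=> f g _ _ e; apply: funext => h.
  have := congr1 (fun F => F h) e; rewrite /phi => /mulIf; apply.
  by apply/eqP; apply: sigma_nz.
split.
  by move=> f g _ _; apply: funext => h; rewrite /phi /ser_add mulrDl.
split.
  move=> f g _ _; apply: funext => l; rewrite /phi /ser_mul mulr_fsuml.
  apply: eq_fsbigr => h _.
  have hl : h + (l - h) = l by rewrite addrC subrK.
  have E : sigma (- beta' h (l - h)) * sigma (- gamma l) =
     sigma (- gamma h) * sigma (- gamma (l - h)) * sigma (- beta h (l - h)).
    rewrite -!sigma_add; congr (sigma _).
    rewrite cocy hl; exact: z1'.
  transitivity (f h * g (l - h) * (sigma (- beta' h (l - h)) * sigma (- gamma l))).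
    by ring.
  rewrite E; ring.
split.
  by exists (fun x : A * H => (x.1 + gamma x.2, x.2)); move=> -[a h];
    rewrite /psi /= ?subrK ?addrK.
split.
  move=> [a h] [b h'] /=; rewrite /psi /addGb /=; congr (_, _).
  by rewrite cocy z4.
split.
  move=> [a h] [b h']; rewrite /leGb /=; split.
    case=> [?|[eh hab]]; first by left.
    by right; split=> //; subst h'; apply: (leAt a b (gamma h)).1.
  case=> [?|[eh hab]]; first by left.
  by right; split=> //; subst h'; apply: (leAt a b (gamma h)).2.
move=> f [a h] _ [fh0 [fmin fv]]; rewrite /is_val /phi /psi /=; split.
  by apply: nzM.
split.
  by move=> h' /= fh'; apply: fmin => fz; apply: fh'; rewrite fz mul0r.
by move: fh0 fv => /= fh0 ->; rewrite v_mul // sigma_v.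
Qed.
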